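(* Let $m,k\in\mathbb{N}$, let $\alpha,\beta,\mu\in\mathbb{C}$ with $\alpha,1+\alpha+\beta+k\notin\mathbb{Z}_0^-$, $\Re(\beta)>0$ and $\Re(\mu)>0$. Then \[ \int_0^\infty t^{\beta-1}e^{-\mu t}\,{}_2F_2\left[\begin{array}{r} -m,\ \alpha;\\ -m-k,\ 1+\alpha+\beta+k;\end{array}\mu t\right]_m dt=\frac{\Gamma(\beta)}{\mu^{\beta}}\frac{\left(1+\alpha+k\right)_m\left(1+\beta+k\right)_m}{\left(1+k\right)_m\left(1+\alpha+\beta+k\right)_m}. \]
   Context: $\mathbb{N}=\{1,2,3,\dots\}$, $\mathbb{Z}_0^-=\{0,-1,-2,\dots\}$. For $a\in\mathbb{C}$ and $n\in\mathbb{N}_0$, $(a)_0=1$ and $(a)_n=a(a+1)\cdots(a+n-1)$. For $N\in\mathbb{N}_0$, the truncated series is ${}_2F_2\left[\begin{array}{r} a_1,a_2;\\ b_1,b_2;\end{array}z\right]_N=\sum_{n=0}^{N}\frac{(a_1)_n(a_2)_n}{(b_1)_n(b_2)_n}\frac{z^n}{n!}$ (first $N+1$ terms). The left side is the Mellin transform $\int_0^\infty t^{s-1}f(t)\,dt$ at $s=\beta$; $\mu^{\beta}$ denotes the principal power. *)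

(* Defs.v *)
From Stdlib Require Import Reals Factorial.
From Coquelicot Require Import Coquelicot.
Open Scope R_scope.

Definition Cexp (z : C) : C :=
  (exp (Re z) * cos (Im z), exp (Re z) * sin (Im z)).

(* principal argument, in (-PI, PI] *)
Definition Carg (z : C) : R :=
  let x := Re z in let y := Im z in
  match Rlt_dec 0 x with
  | left _ => atan (y / x)
  | right _ =>
    match Rlt_dec x 0 with
    | left _ => match Rle_dec 0 y with
                | left _ => atan (y / x) + PI
                | right _ => atan (y / x) - PI end
    | right _ => match Rlt_dec 0 y with
                 | left _ => PI / 2
                 | right _ => match Rlt_dec y 0 with
                              | left _ => - (PI / 2)
                              | right _ => 0 end end
    end
  end.

Definition Clog (z : C) : C := (ln (Cmod z), Carg z).

Definition Cpowc (z w : C) : C := Cexp (w * Clog z)%C.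

Fixpoint poch (a : C) (n : nat) : C :=
  match n with
  | O => 1%C
  | S n' => (poch a n' * (a + RtoC (INR n')))%C
  end.

(* truncated 2F2 series: first N+1 terms *)
Definition F22_trunc (a1 a2 b1 b2 z : C) (N : nat) : C :=
  sum_n (fun n => (poch a1 n * poch a2 n / (poch b1 n * poch b2 n)
                   * (z ^ n) / RtoC (INR (Factorial.fact n)))%C) N.

Definition CGamma (s : C) : C :=
  RInt_gen (V := C_R_CompleteNormedModule)
    (fun t => (Cpowc (RtoC t) (s - 1) * RtoC (exp (- t)))%C)
    (at_right 0) (Rbar_locally p_infty).

Definition in_Z0minus (z : C) : Prop := exists n : nat, z = RtoC (- INR n).

(* Main.v *)
Require Import Defs.
From Stdlib Require Import Reals.
From Coquelicot Require Import Coquelicot.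
From Stdlib Require Import Lra Lia FunctionalExtensionality.
Open Scope R_scope.


Lemma Cexp_add (a b : C) : Cexp (a + b)%C = (Cexp a * Cexp b)%C.
Proof.
  destruct a as [x1 y1]; destruct b as [x2 y2]; unfold Cexp; simpl.
  rewrite exp_plus, cos_plus, sin_plus.
  apply injective_projections; simpl; ring.
Qed.

Lemma Cmod_Cexp (z : C) : Cmod (Cexp z) = exp (Re z).
Proof.
  destruct z as [x y]; unfold Cexp, Cmod; simpl.
  pose proof (sin2_cos2 y) as H. unfold Rsqr in H.
  match goal with |- sqrt ?a = _ => replace a with (exp x * exp x) by nra end.
  rewrite sqrt_square; auto. left; apply exp_pos.
Qed.

Lemma Cexp_neq0 (z : C) : Cexp z <> 0%C.
Proof.
  intro H. pose proof (Cmod_Cexp z). rewrite H, Cmod_0 in H0.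
  pose proof (exp_pos (Re z)). lra.
Qed.

Lemma Cexp_0 : Cexp 0%C = 1%C.
Proof.
  unfold Cexp; simpl. rewrite exp_0, cos_0, sin_0.
  apply injective_projections; simpl; ring.
Qed.

Lemma Cexp_RtoC (x : R) : Cexp (RtoC x) = RtoC (exp x).
Proof.
  unfold Cexp; simpl. rewrite cos_0, sin_0.
  apply injective_projections; simpl; ring.
Qed.

Lemma Cexp_opp (z : C) : Cexp (- z)%C = (/ Cexp z)%C.
Proof.
  assert (H: (Cexp (-z)%C * Cexp z)%C = 1%C).
  { rewrite <- Cexp_add. replace (-z + z)%C with (RtoC 0) by ring. apply Cexp_0. }
  pose proof (Cexp_neq0 z).
  replace (Cexp (-z)%C) with (Cexp (-z)%C * Cexp z / Cexp z)%C by (field; auto).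
  rewrite H. field. auto.
Qed.

Lemma Clog_pos (t : R) : 0 < t -> Clog (RtoC t) = RtoC (ln t).
Proof.
  intros Ht. unfold Clog, Carg, RtoC; simpl.
  destruct (Rlt_dec 0 t); [|lra].
  unfold Rdiv. rewrite Rmult_0_l, atan_0.
  f_equal. f_equal. unfold Cmod; simpl.
  match goal with |- sqrt ?a = _ => replace a with (t*t) by ring end.
  rewrite sqrt_square; lra.
Qed.

Lemma Cpowc_pos (t : R) (w : C) : 0 < t -> Cpowc (RtoC t) w = Cexp (w * RtoC (ln t))%C.
Proof. intros Ht. unfold Cpowc. rewrite Clog_pos; auto. Qed.

Lemma Cmod_Cpowc_pos (t : R) (w : C) : 0 < t -> Cmod (Cpowc (RtoC t) w) = Rpower t (Re w).
Proof.
  intros Ht. rewrite Cpowc_pos, Cmod_Cexp; auto.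
  unfold Rpower. f_equal. destruct w; simpl. ring.
Qed.

Lemma Cpowc_pos_add_nat (t : R) (w : C) (n : nat) : 0 < t ->
  Cpowc (RtoC t) (w + RtoC (INR n))%C = (Cpowc (RtoC t) w * RtoC (t ^ n))%C.
Proof.
  intros Ht. rewrite !Cpowc_pos; auto.
  replace ((w + RtoC (INR n)) * RtoC (ln t))%C with (w * RtoC (ln t) + RtoC (INR n * ln t))%C.
  - rewrite Cexp_add, Cexp_RtoC. f_equal. f_equal.
    rewrite <- ln_pow, exp_ln; auto. apply pow_lt; auto.
  - rewrite RtoC_mult. ring.
Qed.

Lemma norm_C (z : C) : @norm R_AbsRing C_R_NormedModule z = Cmod z.
Proof.
  destruct z as [x y]. unfold norm; simpl. unfold prod_norm, Cmod; simpl.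
  unfold norm; simpl. unfold abs; simpl.
  f_equal. rewrite !Rmult_1_r. rewrite <- !Rabs_mult, !Rabs_right; try ring;
  apply Rle_ge; apply Rle_0_sqr.
Qed.

Lemma exp_le_mono (x y : R) : x <= y -> exp x <= exp y.
Proof.
  intros H. destruct (Rle_lt_or_eq_dec x y H) as [H1|H1].
  - left. apply exp_increasing; auto.
  - subst; apply Rle_refl.
Qed.


Definition CR := C_R_NormedModule.

Lemma is_linear_pairC : is_linear (U := prod_NormedModule R_AbsRing R_NormedModule R_NormedModule)
  (V := C_R_NormedModule) (fun t => (fst t, snd t) : C).
Proof.
  split.
  - intros [a b] [c d]. reflexivity.
  - intros k [a b]. reflexivity.
  - exists 1. split; [lra|]. intros [a b]. rewrite Rmult_1_l. apply Rle_refl.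
Qed.

Lemma is_derive_C_intro (f : R -> C) (x a b : R) :
  is_derive (fun t => fst (f t)) x a -> is_derive (fun t => snd (f t)) x b ->
  is_derive (V := C_R_NormedModule) f x ((a, b) : C).
Proof.
  intros Ha Hb.
  unfold is_derive in *.
  assert (H := filterdiff_comp'_2 (K := R_AbsRing) (W := C_R_NormedModule)
            (fun t => fst (f t)) (fun t => snd (f t))
            (fun u v => (u, v) : C) x _ _ (fun u v => (u, v) : C) Ha Hb).
  simpl in H.
  apply (filterdiff_ext_lin (F := locally x) f (fun y : R => ((scal y a, scal y b) : C))).
  - eapply (filterdiff_ext_locally (fun y => (fst (f y), snd (f y)) : C)); [| apply H].
    + apply filter_forall. intros y. destruct (f y); reflexivity.
    + apply filterdiff_linear. apply is_linear_pairC.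
  - intros y. reflexivity.
Qed.

Lemma is_derive_C_fst (f : R -> C) (x : R) (l : C) :
  is_derive (V := C_R_NormedModule) f x l -> is_derive (fun t => fst (f t)) x (fst l).
Proof.
  intros H. unfold is_derive in *.
  assert (H2 := filterdiff_comp' (K := R_AbsRing) (V := C_R_NormedModule) f
     (fun t : C => fst t) x _ (fun t : C => fst t) H).
  apply H2. apply filterdiff_linear.
  apply (is_linear_fst (U := R_NormedModule) (V := R_NormedModule)).
Qed.

Lemma is_derive_C_snd (f : R -> C) (x : R) (l : C) :
  is_derive (V := C_R_NormedModule) f x l -> is_derive (fun t => snd (f t)) x (snd l).
Proof.
  intros H. unfold is_derive in *.
  assert (H2 := filterdiff_comp' (K := R_AbsRing) (V := C_R_NormedModule) f
     (fun t : C => snd t) x _ (fun t : C => snd t) H).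
  apply H2. apply filterdiff_linear.
  apply (is_linear_snd (U := R_NormedModule) (V := R_NormedModule)).
Qed.

Lemma is_derive_eqv {V : NormedModule R_AbsRing} (f : R -> V) x l l' :
  is_derive f x l -> l = l' -> is_derive f x l'.
Proof. intros H ->; exact H. Qed.

Lemma is_derive_Rmult (f g : R -> R) x df dg :
  is_derive f x df -> is_derive g x dg ->
  is_derive (fun t => f t * g t) x (df * g x + f x * dg).
Proof.
  intros Hf Hg. apply (is_derive_mult f g x df dg Hf Hg). intros; apply Rmult_comm.
Qed.

Lemma is_derive_Cmult (f g : R -> C) x df dg :
  is_derive (V := C_R_NormedModule) f x df ->
  is_derive (V := C_R_NormedModule) g x dg ->
  is_derive (V := C_R_NormedModule) (fun t => (f t * g t)%C) x (df * g x + f x * dg)%C.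
Proof.
  intros Hf Hg.
  pose proof (is_derive_C_fst _ _ _ Hf) as Hf1.
  pose proof (is_derive_C_snd _ _ _ Hf) as Hf2.
  pose proof (is_derive_C_fst _ _ _ Hg) as Hg1.
  pose proof (is_derive_C_snd _ _ _ Hg) as Hg2.
  replace (df * g x + f x * dg)%C with
    (((fst df * fst (g x) + fst (f x) * fst dg) - (snd df * snd (g x) + snd (f x) * snd dg),
      (fst df * snd (g x) + fst (f x) * snd dg) + (snd df * fst (g x) + snd (f x) * fst dg)) : C).
  2: { destruct df, dg, (f x), (g x); apply injective_projections; simpl; ring. }
  apply is_derive_C_intro.
  - eapply is_derive_ext.
    2: { apply (is_derive_minus (K := R_AbsRing) (V := R_NormedModule)).
         apply (is_derive_Rmult (fun t => fst (f t)) (fun t => fst (g t))); eassumption.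
         apply (is_derive_Rmult (fun t => snd (f t)) (fun t => snd (g t))); eassumption. }
    intros t. simpl. unfold minus, plus, opp; simpl. ring.
  - eapply is_derive_ext.
    2: { apply (is_derive_plus (K := R_AbsRing) (V := R_NormedModule)).
         apply (is_derive_Rmult (fun t => fst (f t)) (fun t => snd (g t))); eassumption.
         apply (is_derive_Rmult (fun t => snd (f t)) (fun t => fst (g t))); eassumption. }
    intros t. simpl. unfold plus; simpl. ring.
Qed.

Lemma is_derive_Cexp (f : R -> C) x df :
  is_derive (V := C_R_NormedModule) f x df ->
  is_derive (V := C_R_NormedModule) (fun t => Cexp (f t)) x (df * Cexp (f x))%C.
Proof.
  intros Hf.
  pose proof (is_derive_C_fst _ _ _ Hf) as Hf1.
  pose proof (is_derive_C_snd _ _ _ Hf) as Hf2.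
  assert (He : is_derive (fun t => exp (fst (f t))) x (fst df * exp (fst (f x)))).
  { apply (is_derive_comp exp (fun t => fst (f t))). apply is_derive_exp. exact Hf1. }
  assert (Hc : is_derive (fun t => cos (snd (f t))) x (snd df * - sin (snd (f x)))).
  { apply (is_derive_comp cos (fun t => snd (f t))). apply is_derive_cos. exact Hf2. }
  assert (Hs : is_derive (fun t => sin (snd (f t))) x (snd df * cos (snd (f x)))).
  { apply (is_derive_comp sin (fun t => snd (f t))). apply is_derive_sin. exact Hf2. }
  unfold Cexp, Re, Im.
  eapply is_derive_eqv.
  - apply is_derive_C_intro; simpl.
    + apply (is_derive_Rmult (fun t => exp (fst (f t))) (fun t => cos (snd (f t)))); eassumption.
    + apply (is_derive_Rmult (fun t => exp (fst (f t))) (fun t => sin (snd (f t)))); eassumption.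
  - destruct df, (f x); apply injective_projections; simpl; ring.
Qed.


Lemma minus_C (a b : C) : minus (G := C_R_NormedModule) a b = (a - b)%C.
Proof. reflexivity. Qed.

Lemma scal_C (k : R) (a : C) : scal (V := C_R_NormedModule) k a = (RtoC k * a)%C.
Proof. destruct a as [a1 a2]. change (((k * a1)%R, (k * a2)%R) = (RtoC k * (a1,a2))%C).
 apply injective_projections; simpl; ring. Qed.

Lemma plus_C (a b : C) : plus (G := C_R_NormedModule) a b = (a + b)%C.
Proof. reflexivity. Qed.

Lemma zero_C : zero (G := C_R_NormedModule) = RtoC 0.
Proof. reflexivity. Qed.

Lemma is_derive_Cconst (a : C) x : is_derive (V := C_R_NormedModule) (fun _ => a) x (RtoC 0).
Proof. apply (is_derive_const (K := R_AbsRing) (V := C_R_NormedModule)). Qed.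

Lemma is_derive_Cplus (f g : R -> C) x df dg :
  is_derive (V := C_R_NormedModule) f x df ->
  is_derive (V := C_R_NormedModule) g x dg ->
  is_derive (V := C_R_NormedModule) (fun t => (f t + g t)%C) x (df + dg)%C.
Proof. intros Hf Hg. apply (is_derive_plus (K := R_AbsRing) (V := C_R_NormedModule) f g x df dg Hf Hg). Qed.

Lemma is_derive_Cscal (a : C) (f : R -> C) x df :
  is_derive (V := C_R_NormedModule) f x df ->
  is_derive (V := C_R_NormedModule) (fun t => (a * f t)%C) x (a * df)%C.
Proof.
  intros Hf. eapply is_derive_eqv.
  - apply (is_derive_Cmult (fun _ => a) f). apply is_derive_Cconst. exact Hf.
  - simpl. ring.
Qed.

Lemma MVI (f df : R -> C) (a b M : R) : a <= b ->
  (forall x, a <= x <= b -> is_derive (V := C_R_NormedModule) f x (df x)) ->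
  (forall x, a <= x <= b -> continuous (U := C_R_NormedModule) df x) ->
  (forall x, a <= x <= b -> Cmod (df x) <= M) ->
  Cmod (f b - f a)%C <= (b - a) * M.
Proof.
  intros Hab Hd Hc HM.
  assert (H := is_RInt_derive (V := C_R_CompleteNormedModule) f df a b).
  rewrite Rmin_left, Rmax_right in H by lra.
  specialize (H Hd Hc).
  assert (H2 := norm_RInt_le (V := C_R_NormedModule) df (fun _ => M) a b (minus (f b) (f a)) (scal (b - a) M) Hab).
  rewrite <- norm_C. rewrite <- minus_C.
  replace ((b - a) * M) with (scal (b - a) M) by reflexivity.
  apply H2.
  - intros x Hx. rewrite norm_C. apply HM; auto.
  - exact H.
  - apply (is_RInt_const (V := R_NormedModule)).
Qed.

Lemma is_derive_lin (a b : C) x :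
  is_derive (V := C_R_NormedModule) (fun t => (RtoC t * a + b)%C) x a.
Proof.
  destruct a as [a1 a2]; destruct b as [b1 b2].
  eapply is_derive_eqv.
  - apply is_derive_C_intro.
    + eapply is_derive_ext with (f := fun t => t * a1 + b1).
      { intros t; simpl; ring. }
      auto_derive; auto.
    + eapply is_derive_ext with (f := fun t => t * a2 + b2).
      { intros t; simpl; ring. }
      auto_derive; auto.
  - apply injective_projections; simpl; ring.
Qed.

Lemma Cexp_taylor1 (z : C) :
  Cmod (Cexp (- z)%C - 1 + z)%C <= (Cmod z) ^ 2 * exp (Cmod z).
Proof.
  set (psi := fun t : R => Cexp (RtoC t * (- z) + 0)%C).
  assert (Dpsi : forall t, is_derive (V := C_R_NormedModule) psi t ((- z) * psi t)%C).
  { intros t. apply is_derive_Cexp. apply is_derive_lin. }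
  assert (Cdpsi : forall t, continuous (U := C_R_NormedModule) (fun u => ((- z) * psi u)%C) t).
  { intros t. apply (ex_derive_continuous (K := R_AbsRing) (V := C_R_NormedModule)).
    eexists. apply is_derive_Cscal. apply Dpsi. }
  assert (Bpsi : forall t, 0 <= t <= 1 -> Cmod (psi t) <= exp (Cmod z)).
  { intros t Ht. unfold psi. rewrite Cmod_Cexp. apply exp_le_mono.
    pose proof (re_le_Cmod z). destruct z as [z1 z2]. unfold Re in *; simpl in *.
    destruct (Rle_lt_dec 0 z1).
    - apply Rle_trans with 0. rewrite Rabs_right in H by lra. nra. apply Cmod_ge_0.
    - rewrite Rabs_left in H by lra. nra. }
  assert (Hpsi0 : psi 0 = 1%C).
  { unfold psi. replace (RtoC 0 * - z + 0)%C with (RtoC 0) by ring. apply Cexp_0. }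
  assert (Hpsi1 : psi 1 = Cexp (- z)%C).
  { unfold psi. f_equal. ring. }
  assert (A : forall t, 0 <= t <= 1 -> Cmod (psi t - 1)%C <= t * (Cmod z * exp (Cmod z))).
  { intros t Ht. rewrite <- Hpsi0. replace t with (t - 0) at 2 by ring.
    apply MVI with (df := fun u => ((- z) * psi u)%C).
    - lra.
    - intros; apply Dpsi.
    - intros; apply Cdpsi.
    - intros x Hx. rewrite Cmod_mult, Cmod_opp. apply Rmult_le_compat_l. apply Cmod_ge_0.
      apply Bpsi. lra. }
  set (phi := fun t : R => (psi t + (RtoC t * z + (- 1)))%C).
  assert (Dphi : forall t, is_derive (V := C_R_NormedModule) phi t ((- z) * psi t + z)%C).
  { intros t. apply is_derive_Cplus. apply Dpsi. apply is_derive_lin. }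
  assert (Cdphi : forall t, continuous (U := C_R_NormedModule) (fun u => ((- z) * psi u + z)%C) t).
  { intros t. apply (ex_derive_continuous (K := R_AbsRing) (V := C_R_NormedModule)).
    eexists. apply is_derive_Cplus. apply is_derive_Cscal. apply Dpsi. apply is_derive_Cconst. }
  assert (M := MVI phi (fun u => ((- z) * psi u + z)%C) 0 1 (Cmod z ^ 2 * exp (Cmod z))).
  replace (Cexp (- z)%C - 1 + z)%C with (phi 1 - phi 0)%C.
  - replace (Cmod z ^ 2 * exp (Cmod z)) with ((1 - 0) * (Cmod z ^ 2 * exp (Cmod z))) by ring.
    apply M.
    + lra.
    + intros; apply Dphi.
    + intros; apply Cdphi.
    + intros x Hx.
      replace ((- z) * psi x + z)%C with ((- z) * (psi x - 1))%C by ring.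
      rewrite Cmod_mult, Cmod_opp.
      specialize (A x Hx).
      assert (0 <= Cmod z) by apply Cmod_ge_0.
      assert (0 <= exp (Cmod z)) by (left; apply exp_pos).
      apply Rle_trans with (Cmod z * (x * (Cmod z * exp (Cmod z)))).
      * apply Rmult_le_compat_l; auto.
      * simpl. assert (0 <= Cmod z * (Cmod z * exp (Cmod z))) by (repeat apply Rmult_le_pos; auto).
        nra.
  - unfold phi. rewrite Hpsi0, Hpsi1. ring.
Qed.


Lemma y_le_exp (y : R) : y <= exp y.
Proof. pose proof (exp_ineq1_le y). lra. Qed.

Lemma exp_pow_nat (x : R) (n : nat) : exp x ^ n = exp (INR n * x).
Proof.
  induction n.
  - simpl. rewrite Rmult_0_l, exp_0. reflexivity.
  - rewrite S_INR. simpl. rewrite IHn. rewrite <- exp_plus. f_equal. ring.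
Qed.

Lemma poly_exp_bound (p b : R) : 0 < b ->
  exists K, 0 < K /\ forall t, 1 <= t -> Rpower t p <= K * exp (b * t).
Proof.
  intros Hb.
  destruct (INR_unbounded p) as [n Hn].
  set (N := S n).
  assert (HN : 0 < INR N) by (unfold N; rewrite S_INR; pose proof (pos_INR n); lra).
  assert (HpN : p <= INR N) by (unfold N; rewrite S_INR; lra).
  exists ((INR N / b) ^ N). split.
  - apply pow_lt. apply Rdiv_lt_0_compat; auto.
  - intros t Ht.
    apply Rle_trans with (Rpower t (INR N)).
    { apply Rle_Rpower; auto. }
    rewrite Rpower_pow by lra.
    assert (H1 : t <= INR N / b * exp (b * t / INR N)).
    { pose proof (y_le_exp (b * t / INR N)).
      replace t with (INR N / b * (b * t / INR N)) at 1 by (field; lra).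
      apply Rmult_le_compat_l; auto. left; apply Rdiv_lt_0_compat; auto. }
    apply Rle_trans with ((INR N / b * exp (b * t / INR N)) ^ N).
    { apply pow_incr. lra. }
    rewrite Rpow_mult_distr. apply Rmult_le_compat_l.
    + left; apply pow_lt; apply Rdiv_lt_0_compat; auto.
    + rewrite exp_pow_nat. right. f_equal. field. lra.
Qed.

Lemma le_eps_gen (x y k : R) : 0 <= k -> (forall eps, 0 < eps -> x <= y + k * eps) -> x <= y.
Proof.
  intros Hk H.
  destruct (Rle_lt_dec x y) as [h|h]; auto.
  specialize (H ((x - y) / (2 * (k + 1)))).
  assert (0 < (x - y) / (2 * (k + 1))) by (apply Rdiv_lt_0_compat; lra).
  specialize (H H0).
  assert (k * ((x - y) / (2 * (k + 1))) < x - y).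
  { apply Rle_lt_trans with ((k+1) * ((x - y) / (2 * (k + 1)))).
    - apply Rmult_le_compat_r; lra.
    - replace ((k + 1) * ((x - y) / (2 * (k + 1)))) with ((x - y) / 2) by (field; lra). lra. }
  lra.
Qed.

Lemma is_derive_Rpower (x p : R) : 0 < x ->
  is_derive (fun t => Rpower t p) x (p * Rpower x (p - 1)).
Proof. intros Hx. apply is_derive_Reals. apply derivable_pt_lim_power. auto. Qed.

Definition IG (g : R -> C) (I : C) : Prop :=
  is_RInt_gen (V := C_R_NormedModule) g (at_right 0) (Rbar_locally p_infty) I.

Definition CRInt (g : R -> C) (a b : R) : C := RInt (V := C_R_CompleteNormedModule) g a b.

Definition PF := @filter_prod_proper _ _ (at_right 0) (Rbar_locally p_infty)
   (at_right_proper_filter 0) (Rbar_locally_filter p_infty).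

Lemma ex_RInt_pos (g : R -> C) x y : 0 < x -> 0 < y ->
  (forall t, 0 < t -> continuous (U := C_R_NormedModule) g t) ->
  ex_RInt (V := C_R_CompleteNormedModule) g x y.
Proof.
  intros Hx Hy Hc. apply ex_RInt_continuous. intros z Hz. apply Hc.
  destruct Hz as [Hz _]. eapply Rlt_le_trans; [|exact Hz].
  apply Rmin_glb_lt; auto.
Qed.

Lemma CRInt_bound (g : R -> C) (m : R -> R) x y lm : x <= y ->
  (forall t, x <= t <= y -> Cmod (g t) <= m t) ->
  ex_RInt (V := C_R_CompleteNormedModule) g x y ->
  is_RInt m x y lm -> Cmod (CRInt g x y) <= lm.
Proof.
  intros Hxy Hm Hex Hi.
  rewrite <- norm_C. unfold CRInt.
  apply (norm_RInt_le (V := C_R_NormedModule) g m x y _ lm Hxy).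
  - intros t Ht. rewrite norm_C. apply Hm; auto.
  - apply (RInt_correct (V := C_R_CompleteNormedModule)). exact Hex.
  - exact Hi.
Qed.

Lemma CRInt_swap (g : R -> C) x y :
  ex_RInt (V := C_R_CompleteNormedModule) g x y -> Cmod (CRInt g y x) = Cmod (CRInt g x y).
Proof.
  intros H. unfold CRInt. rewrite <- (opp_RInt_swap (V := C_R_CompleteNormedModule)) by auto.
  rewrite <- !norm_C. apply (norm_opp (V := C_R_NormedModule)).
Qed.

Lemma CRInt_Chasles (g : R -> C) a b c :
  ex_RInt (V := C_R_CompleteNormedModule) g a b ->
  ex_RInt (V := C_R_CompleteNormedModule) g b c ->
  (CRInt g a b + CRInt g b c)%C = CRInt g a c.
Proof.
  intros H1 H2. unfold CRInt. rewrite <- (RInt_Chasles (V := C_R_CompleteNormedModule) g a b c H1 H2).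
  reflexivity.
Qed.

Lemma frac_lt (X e : R) : 0 <= X -> 0 < e -> e * (X / (X + 1)) < e.
Proof.
  intros HX He.
  assert (X / (X + 1) < 1).
  { apply (Rmult_lt_reg_r (X + 1)). lra.
    replace (X / (X + 1) * (X + 1)) with X by (field; lra). lra. }
  assert (0 <= X / (X + 1)) by (apply Rdiv_le_0_compat; lra).
  nra.
Qed.


Lemma ex_bound (p b : R) : 0 < p -> 0 < b -> exists B, 0 <= B /\
  forall (g : R -> C) (c : R), 0 <= c ->
  (forall t, 0 < t -> continuous (U := C_R_NormedModule) g t) ->
  (forall t, 0 < t -> Cmod (g t) <= c * (Rpower t (p - 1) * exp (- b * t))) ->
  exists I, IG g I /\ Cmod I <= c * B.
Proof.
  intros Hp Hb.
  destruct (poly_exp_bound (p - 1) (b / 2)) as [K [HK HKb]]; [lra|].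
  exists (1 / p + K * (2 / b) * exp (- (b / 2) * 1)).
  split.
  { assert (0 < 1/p) by (apply Rdiv_lt_0_compat; lra).
    assert (0 < K * (2 / b) * exp (- (b / 2) * 1)).
    { assert (0 < 2 / b) by (apply Rdiv_lt_0_compat; lra).
      pose proof (exp_pos (- (b / 2) * 1)).
      apply Rmult_lt_0_compat; auto. apply Rmult_lt_0_compat; auto. }
    lra. }
  intros g c Hc Hcont Hg.
  set (F0 := fun t => (c / p) * Rpower t p).
  set (F1 := fun t => - (c * K * (2 / b)) * exp (- (b / 2) * t)).
  assert (Hex : forall x y, 0 < x -> 0 < y -> ex_RInt (V := C_R_CompleteNormedModule) g x y).
  { intros; apply ex_RInt_pos; auto. }
  assert (B0 : forall x y, 0 < x -> x <= y -> y <= 1 -> Cmod (CRInt g x y) <= F0 y - F0 x).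
  { intros x y Hx Hxy Hy1.
    apply CRInt_bound with (m := fun t => c * Rpower t (p - 1)); auto.
    - intros t Ht. eapply Rle_trans; [apply Hg; lra|].
      apply Rmult_le_compat_l; auto.
      rewrite <- (Rmult_1_r (Rpower t (p - 1))) at 2.
      apply Rmult_le_compat_l. unfold Rpower; left; apply exp_pos.
      rewrite <- exp_0. apply exp_le_mono. nra.
    - apply Hex; lra.
    - apply (is_RInt_derive (V := R_CompleteNormedModule) F0).
      + intros t Ht. rewrite Rmin_left, Rmax_right in Ht by lra.
        eapply is_derive_eqv. unfold F0. apply is_derive_scal. apply is_derive_Rpower. lra.
        change (c / p * (p * Rpower t (p - 1)) = c * Rpower t (p - 1)). field. lra.
      + intros t' Ht. rewrite Rmin_left, Rmax_right in Ht by lra.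
        apply (ex_derive_continuous (K := R_AbsRing) (V := R_NormedModule)).
        eexists. apply is_derive_scal. apply is_derive_Rpower. lra. }
  assert (B1 : forall x y, 1 <= x -> x <= y -> Cmod (CRInt g x y) <= F1 y - F1 x).
  { intros x y Hx Hxy.
    apply CRInt_bound with (m := fun t => c * K * exp (- (b / 2) * t)); auto.
    - intros t Ht. eapply Rle_trans; [apply Hg; lra|].
      rewrite Rmult_assoc. apply Rmult_le_compat_l; auto.
      apply Rle_trans with (K * exp (b / 2 * t) * exp (- b * t)).
      + apply Rmult_le_compat_r. left; apply exp_pos. apply HKb. lra.
      + rewrite Rmult_assoc, <- exp_plus.
        replace (b / 2 * t + - b * t) with (- (b / 2) * t) by field. lra.
    - apply Hex; lra.
    - apply (is_RInt_derive (V := R_CompleteNormedModule) F1).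
      + intros t Ht. unfold F1. auto_derive; auto. field. lra.
      + intros t Ht. apply continuity_pt_filterlim. apply derivable_continuous_pt.
        apply derivable_pt_mult. apply derivable_pt_const.
        apply derivable_pt_comp. apply derivable_pt_scal. apply derivable_pt_id.
        apply derivable_pt_exp. }
  assert (F0pos : forall u, 0 < u -> 0 <= F0 u).
  { intros u Hu. unfold F0. apply Rmult_le_pos. apply Rdiv_le_0_compat; lra.
    unfold Rpower; left; apply exp_pos. }
  assert (F0mono : forall u v, 0 < u <= v -> F0 u <= F0 v).
  { intros u v Huv. unfold F0. apply Rmult_le_compat_l. apply Rdiv_le_0_compat; lra.
    apply Rle_Rpower_l; lra. }
  assert (CK : 0 <= c * K * (2 / b)).
  { apply Rmult_le_pos. apply Rmult_le_pos; lra. left; apply Rdiv_lt_0_compat; lra. }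
  assert (F1neg : forall u, F1 u <= 0).
  { intros u. unfold F1. pose proof (exp_pos (- (b / 2) * u)). nra. }
  assert (F1mono : forall u v, u <= v -> F1 u <= F1 v).
  { intros u v Huv. unfold F1.
    assert (exp (- (b / 2) * v) <= exp (- (b / 2) * u)) by (apply exp_le_mono; nra).
    nra. }
  assert (S0 : forall eta x y, 0 < eta <= 1 -> 0 < x <= eta -> 0 < y <= eta ->
     Cmod (CRInt g x y) <= F0 eta).
  { intros eta x y He Hx Hy.
    destruct (Rle_dec x y) as [h|h].
    - eapply Rle_trans. apply B0; lra.
      pose proof (F0pos x). pose proof (F0mono y eta). lra.
    - rewrite CRInt_swap by (apply Hex; lra). eapply Rle_trans. apply B0; lra.
      pose proof (F0pos y). pose proof (F0mono x eta). lra. }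
  assert (S1 : forall M x y, 1 <= M -> M <= x -> M <= y -> Cmod (CRInt g x y) <= - F1 M).
  { intros M x y HM Hx Hy.
    destruct (Rle_dec x y) as [h|h].
    - eapply Rle_trans. apply B1; lra.
      pose proof (F1neg y). pose proof (F1mono M x). lra.
    - rewrite CRInt_swap by (apply Hex; lra). eapply Rle_trans. apply B1; lra.
      pose proof (F1neg x). pose proof (F1mono M y). lra. }
  assert (Tot : forall x y, 0 < x <= 1 -> 1 <= y ->
     Cmod (CRInt g x y) <= c * (1 / p + K * (2 / b) * exp (- (b / 2) * 1))).
  { intros x y Hx Hy.
    rewrite <- (CRInt_Chasles g x 1 y) by (apply Hex; lra).
    eapply Rle_trans. apply Cmod_triangle.
    assert (E1 : F0 1 = c / p).
    { unfold F0, Rpower. rewrite ln_1, Rmult_0_r, exp_0. field. lra. }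
    pose proof (B0 x 1 ltac:(lra) ltac:(lra) ltac:(lra)).
    pose proof (B1 1 y ltac:(lra) ltac:(lra)).
    pose proof (F0pos x ltac:(lra)). pose proof (F1neg y).
    assert (E2 : - F1 1 = c * K * (2 / b) * exp (- (b / 2) * 1)) by (unfold F1; ring).
    replace (c * (1 / p + K * (2 / b) * exp (- (b / 2) * 1))) with (F0 1 + - F1 1)
      by (rewrite E1, E2; field; lra).
    lra. }
  set (ff := fun (ab : R * R) (l : C_R_CompleteNormedModule) => is_RInt (V := C_R_CompleteNormedModule) g (fst ab) (snd ab) l).
  assert (Cond1 : filter_prod (at_right 0) (Rbar_locally p_infty)
      (fun ab => (exists y, ff ab y) /\ (forall y1 y2, ff ab y1 -> ff ab y2 -> y1 = y2))).
  { apply Filter_prod with (Q := fun x => 0 < x) (R := fun y => 0 < y).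
    - unfold at_right, within. apply filter_forall. auto.
    - simpl. exists 0. auto.
    - intros x y Hx Hy. split.
      + exists (CRInt g x y). unfold ff, CRInt. apply (RInt_correct (V := C_R_CompleteNormedModule)). apply Hex; auto.
      + intros y1 y2 H1 H2. unfold ff in *. simpl in *.
        rewrite <- (is_RInt_unique (V := C_R_CompleteNormedModule) _ _ _ _ H1). rewrite <- (is_RInt_unique (V := C_R_CompleteNormedModule) _ _ _ _ H2).
        reflexivity. }
  assert (Hcv : exists I : C_R_CompleteNormedModule,
     filterlimi ff (filter_prod (at_right 0) (Rbar_locally p_infty)) (locally I)).
  { apply (proj1 (filterlimi_locally_cauchy (F := filter_prod (at_right 0) (Rbar_locally p_infty))
             (FF := PF) ff Cond1)).
    intros eps.
    set (e2 := eps / 2).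
    assert (He2 : 0 < e2) by (unfold e2; destruct eps; simpl; lra).
    set (A := e2 * p / (c + 1)).
    assert (HA : 0 < A) by (unfold A; apply Rdiv_lt_0_compat; [nra|lra]).
    set (eta := Rmin 1 (Rpower A (1 / p))).
    assert (Heta : 0 < eta <= 1).
    { unfold eta. split. apply Rmin_glb_lt. lra. unfold Rpower; apply exp_pos. apply Rmin_l. }
    assert (Feta : F0 eta < e2).
    { apply Rle_lt_trans with (c / p * A).
      - unfold F0. apply Rmult_le_compat_l. apply Rdiv_le_0_compat; lra.
        replace A with (Rpower (Rpower A (1 / p)) p).
        + apply Rle_Rpower_l. lra. split. lra. apply Rmin_r.
        + rewrite Rpower_mult. replace (1 / p * p) with 1 by (field; lra). apply Rpower_1; auto.
      - unfold A. replace (c / p * (e2 * p / (c + 1))) with (e2 * (c / (c + 1))) by (field; lra).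
        assert (c / (c + 1) < 1). { apply (Rmult_lt_reg_r (c + 1)). lra.
          replace (c / (c + 1) * (c + 1)) with c by (field; lra). lra. }
        nra. }
    set (A1 := (c * K * (2 / b) + 1) / e2).
    assert (HA1 : 0 < A1) by (unfold A1; apply Rdiv_lt_0_compat; lra).
    set (M := Rmax 1 ((2 / b) * ln A1)).
    assert (HM : 1 <= M) by apply Rmax_l.
    assert (FM : - F1 M < e2).
    { unfold F1.
      assert (exp (- (b / 2) * M) <= / A1).
      { rewrite <- (exp_ln A1) by auto. rewrite <- exp_Ropp. apply exp_le_mono.
        assert ((2 / b) * ln A1 <= M) by apply Rmax_r.
        assert (- (b / 2) * M <= - (b / 2) * ((2 / b) * ln A1)).
        { apply Rmult_le_compat_neg_l. lra. auto. }
        replace (- (b / 2) * (2 / b * ln A1)) with (- ln A1) in H0 by (field; lra). exact H0. }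
      apply Rle_lt_trans with (c * K * (2 / b) * / A1).
      - replace (- (- (c * K * (2 / b)) * exp (- (b / 2) * M))) with
          (c * K * (2 / b) * exp (- (b / 2) * M)) by ring.
        apply Rmult_le_compat_l; auto.
      - unfold A1.
        assert (EE : forall X e, 0 <= X -> 0 < e -> X * / ((X + 1) / e) = e * (X / (X + 1))).
        { intros X e HX He. field. lra. }
        rewrite EE by lra. apply frac_lt; lra. }
    exists (fun ab : R * R => (0 < fst ab < eta) /\ M < snd ab).
    split.
    - apply Filter_prod with (Q := fun x => 0 < x < eta) (R := fun y => M < y).
      + unfold at_right, within. exists (mkposreal eta (proj1 Heta)).
        intros y Hy Hy0. split; auto.
        unfold ball in Hy; simpl in Hy. unfold AbsRing_ball, abs, minus, plus, opp in Hy; simpl in Hy.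
        rewrite Rabs_right in Hy by lra. lra.
      + simpl. exists M. auto.
      + intros x y Hx Hy. simpl. auto.
    - intros [u1 u2] [v1 v2] [Hu1 Hu2] [Hv1 Hv2] u' v' Hu' Hv'.
      unfold ff in *. simpl in *.
      apply (norm_compat1 (V := C_R_NormedModule)).
      rewrite <- (is_RInt_unique (V := C_R_CompleteNormedModule) _ _ _ _ Hu'). rewrite <- (is_RInt_unique (V := C_R_CompleteNormedModule) _ _ _ _ Hv').
      fold (CRInt g u1 u2). fold (CRInt g v1 v2).
      rewrite minus_C, norm_C.
      rewrite <- (CRInt_Chasles g v1 u1 v2) by (apply Hex; lra).
      rewrite <- (CRInt_Chasles g u1 u2 v2) by (apply Hex; lra).
      replace (CRInt g v1 u1 + (CRInt g u1 u2 + CRInt g u2 v2) - CRInt g u1 u2)%C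
        with (CRInt g v1 u1 + CRInt g u2 v2)%C by ring.
      eapply Rle_lt_trans. apply Cmod_triangle.
      pose proof (S0 eta v1 u1 Heta ltac:(lra) ltac:(lra)).
      pose proof (S1 M u2 v2 HM ltac:(lra) ltac:(lra)).
      replace (pos eps) with (e2 + e2) by (unfold e2; field).
      lra. }
  destruct Hcv as [I HI].
  exists I. split.
  - exact HI.
  - apply le_eps_gen with (k := @norm_factor R_AbsRing C_R_NormedModule).
    { left; apply norm_factor_gt_0. }
    intros eps Heps.
    assert (H1 := HI (ball I (mkposreal eps Heps)) (locally_ball I (mkposreal eps Heps))).
    unfold filtermapi in H1.
    assert (H2 : filter_prod (at_right 0) (Rbar_locally p_infty)
              (fun ab : R * R => 0 < fst ab <= 1 /\ 1 <= snd ab)).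
    { apply Filter_prod with (Q := fun x => 0 < x <= 1) (R := fun y => 1 <= y).
      + unfold at_right, within. exists (mkposreal 1 ltac:(lra)).
        intros y Hy Hy0. split; auto.
        unfold ball in Hy; simpl in Hy. unfold AbsRing_ball, abs, minus, plus, opp in Hy; simpl in Hy.
        rewrite Rabs_right in Hy by lra. lra.
      + simpl. exists 1. intros; lra.
      + intros x y Hx Hy. simpl. auto. }
    destruct (filter_ex (F := filter_prod (at_right 0) (Rbar_locally p_infty)) (ProperFilter := PF) _
               (filter_and _ _ H1 H2)) as [[x y] [[l [Hl Hball]] [Hx Hy]]].
    simpl in *.
    pose proof (norm_compat2 (V := C_R_CompleteNormedModule) I l (mkposreal eps Heps) Hball) as Hb2.
    clear Hball. rename Hb2 into Hball. simpl in Hball.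
    change (@norm R_AbsRing C_R_NormedModule (@minus (NormedModule.AbelianGroup R_AbsRing C_R_NormedModule) l I) < @norm_factor R_AbsRing C_R_NormedModule * eps) in Hball.
    rewrite minus_C, norm_C in Hball.
    rewrite <- (is_RInt_unique (V := C_R_CompleteNormedModule) _ _ _ _ Hl) in Hball.
    simpl in Hball. fold (CRInt g x y) in Hball.
    pose proof (Tot x y Hx Hy).
    replace I with (CRInt g x y - (CRInt g x y - I))%C by ring.
    eapply Rle_trans. apply Cmod_triangle. rewrite Cmod_opp.
    lra.
Qed.


Lemma IG_unique (g : R -> C) I1 I2 : IG g I1 -> IG g I2 -> I1 = I2.
Proof.
  intros H1 H2.
  assert (E1 : RInt_gen (V := C_R_CompleteNormedModule) g (at_right 0) (Rbar_locally p_infty) = I1)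
    by (apply is_RInt_gen_unique; exact H1).
  assert (E2 : RInt_gen (V := C_R_CompleteNormedModule) g (at_right 0) (Rbar_locally p_infty) = I2)
    by (apply is_RInt_gen_unique; exact H2).
  congruence.
Qed.

Lemma IG_RInt_gen (g : R -> C) I : IG g I ->
  RInt_gen (V := C_R_CompleteNormedModule) g (at_right 0) (Rbar_locally p_infty) = I.
Proof. intros H. apply is_RInt_gen_unique; exact H. Qed.

Lemma IG_plus (f g : R -> C) If Ig : IG f If -> IG g Ig -> IG (fun t => (f t + g t)%C) (If + Ig)%C.
Proof.
  intros Hf Hg. unfold IG in *.
  apply (is_RInt_gen_plus (V := C_R_NormedModule) f g If Ig Hf Hg).
Qed.

Lemma IG_minus (f g : R -> C) If Ig : IG f If -> IG g Ig -> IG (fun t => (f t - g t)%C) (If - Ig)%C.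
Proof.
  intros Hf Hg. unfold IG in *.
  apply (is_RInt_gen_minus (V := C_R_NormedModule) f g If Ig Hf Hg).
Qed.

Lemma IG_zero : IG (fun _ => RtoC 0) (RtoC 0).
Proof.
  unfold IG. intros P HP. unfold filtermapi.
  apply filter_forall. intros [a b]. exists (RtoC 0). split.
  - assert (H := is_RInt_const (V := C_R_NormedModule) a b (RtoC 0)).
    rewrite scal_C in H. replace (RtoC (b - a) * RtoC 0)%C with (RtoC 0) in H by ring. exact H.
  - apply locally_singleton. exact HP.
Qed.

Lemma IG_ext (f g : R -> C) I : (forall t, 0 < t -> f t = g t) -> IG f I -> IG g I.
Proof.
  intros Hfg Hf. unfold IG in *.
  apply (is_RInt_gen_ext (V := C_R_NormedModule) f g I); auto.
  apply Filter_prod with (Q := fun x => 0 < x) (R := fun y => 0 < y).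
  - unfold at_right, within. apply filter_forall. auto.
  - simpl. exists 0. auto.
  - intros x y Hx Hy z Hz. simpl in Hz. apply Hfg.
    destruct Hz as [Hz _]. eapply Rle_lt_trans; [|exact Hz].
    apply Rmin_glb; lra.
Qed.

Lemma is_RInt_Cmult (f : R -> C) a b l (k : C) :
  is_RInt (V := C_R_NormedModule) f a b l ->
  is_RInt (V := C_R_NormedModule) (fun t => (k * f t)%C) a b (k * l)%C.
Proof.
  intros H.
  pose proof (is_RInt_fct_extend_fst (U := R_NormedModule) (V := R_NormedModule) f a b l H) as H1.
  pose proof (is_RInt_fct_extend_snd (U := R_NormedModule) (V := R_NormedModule) f a b l H) as H2.
  destruct k as [k1 k2].
  replace ((k1, k2) * l)%C with
    ((k1 * fst l - k2 * snd l, k1 * snd l + k2 * fst l) : C).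
  2: { destruct l; apply injective_projections; simpl; ring. }
  apply (is_RInt_fct_extend_pair (U := R_NormedModule) (V := R_NormedModule)).
  - eapply is_RInt_ext.
    2: { apply (is_RInt_minus (V := R_NormedModule)).
         apply (is_RInt_scal (V := R_NormedModule) _ a b k1 _ H1).
         apply (is_RInt_scal (V := R_NormedModule) _ a b k2 _ H2). }
    intros x _. simpl. unfold minus, plus, opp, scal; simpl. unfold mult; simpl. ring.
  - eapply is_RInt_ext.
    2: { apply (is_RInt_plus (V := R_NormedModule)).
         apply (is_RInt_scal (V := R_NormedModule) _ a b k1 _ H2).
         apply (is_RInt_scal (V := R_NormedModule) _ a b k2 _ H1). }
    intros x _. simpl. unfold plus, scal; simpl. unfold mult; simpl. ring.
Qed.

Lemma ball_R_iff (x y e : R) : ball x e y <-> Rabs (y - x) < e.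
Proof. split; intros H; exact H. Qed.

Lemma locally_Cmult (k l : C) (P : C -> Prop) :
  locally (T := C_R_NormedModule) (k * l)%C P ->
  locally (T := C_R_NormedModule) l (fun z => P (k * z)%C).
Proof.
  intros [eps Heps].
  destruct k as [k1 k2].
  set (d := eps / (Rabs k1 + Rabs k2 + 1)).
  assert (Hd : 0 < d).
  { unfold d. apply Rdiv_lt_0_compat. destruct eps; simpl; lra.
    pose proof (Rabs_pos k1); pose proof (Rabs_pos k2); lra. }
  exists (mkposreal d Hd). intros z Hz. apply Heps.
  destruct z as [z1 z2]; destruct l as [l1 l2].
  destruct Hz as [Hz1 Hz2]. simpl in Hz1, Hz2.
  assert (A1 : Rabs (z1 - l1) < d) by exact Hz1.
  assert (A2 : Rabs (z2 - l2) < d) by exact Hz2.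
  split; simpl; apply ball_R_iff.
  - replace (k1 * z1 - k2 * z2 - (k1 * l1 - k2 * l2)) with
      (k1 * (z1 - l1) - k2 * (z2 - l2)) by ring.
    eapply Rle_lt_trans. apply Rabs_triang. rewrite Rabs_Ropp, !Rabs_mult.
    apply Rlt_le_trans with ((Rabs k1 + Rabs k2 + 1) * d).
    + pose proof (Rabs_pos k1); pose proof (Rabs_pos k2).
      assert (Rabs k1 * Rabs (z1 - l1) <= Rabs k1 * d) by (apply Rmult_le_compat_l; lra).
      assert (Rabs k2 * Rabs (z2 - l2) <= Rabs k2 * d) by (apply Rmult_le_compat_l; lra).
      nra.
    + unfold d. right. field. pose proof (Rabs_pos k1); pose proof (Rabs_pos k2); lra.
  - replace (k1 * z2 + k2 * z1 - (k1 * l2 + k2 * l1)) with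
      (k1 * (z2 - l2) + k2 * (z1 - l1)) by ring.
    eapply Rle_lt_trans. apply Rabs_triang. rewrite !Rabs_mult.
    apply Rlt_le_trans with ((Rabs k1 + Rabs k2 + 1) * d).
    + pose proof (Rabs_pos k1); pose proof (Rabs_pos k2).
      assert (Rabs k1 * Rabs (z2 - l2) <= Rabs k1 * d) by (apply Rmult_le_compat_l; lra).
      assert (Rabs k2 * Rabs (z1 - l1) <= Rabs k2 * d) by (apply Rmult_le_compat_l; lra).
      nra.
    + unfold d. right. field. pose proof (Rabs_pos k1); pose proof (Rabs_pos k2); lra.
Qed.

Lemma IG_Cmult (f : R -> C) I (k : C) : IG f I -> IG (fun t => (k * f t)%C) (k * I)%C.
Proof.
  intros H. unfold IG, is_RInt_gen in *. intros P HP.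
  specialize (H _ (locally_Cmult k I P HP)).
  unfold filtermapi in *.
  eapply filter_imp; [|exact H].
  intros ab [y [Hy HPy]]. exists (k * y)%C. split; auto.
  apply is_RInt_Cmult. exact Hy.
Qed.

Lemma Cmod_ball0 (y : C) (eps : R) : Cmod y < eps -> ball (M := C_R_NormedModule) (RtoC 0) eps y.
Proof.
  intros H. apply (norm_compat1 (V := C_R_NormedModule)).
  rewrite minus_C, norm_C. replace (y - RtoC 0)%C with y by ring. exact H.
Qed.

Lemma IG_FTC (h phi : R -> C) :
  (forall x y, 0 < x -> 0 < y -> is_RInt (V := C_R_NormedModule) h x y (phi y - phi x)%C) ->
  (forall eps, 0 < eps -> exists eta, 0 < eta /\ forall x, 0 < x < eta -> Cmod (phi x) < eps) ->
  (forall eps, 0 < eps -> exists M, forall y, M < y -> Cmod (phi y) < eps) ->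
  IG h (RtoC 0).
Proof.
  intros Hi H0 Hinf. unfold IG, is_RInt_gen. intros P [eps HP].
  unfold filtermapi.
  assert (He : 0 < eps / 2) by (destruct eps; simpl; lra).
  destruct (H0 _ He) as [eta [Heta Heta']].
  destruct (Hinf _ He) as [M HM].
  apply Filter_prod with (Q := fun x => 0 < x < eta) (R := fun y => Rmax M 0 < y).
  - unfold at_right, within. exists (mkposreal eta Heta).
    intros y Hy Hy0. split; auto.
    assert (A : Rabs (y - 0) < eta) by exact Hy.
    rewrite Rabs_right in A by lra. lra.
  - simpl. exists (Rmax M 0). auto.
  - intros x y Hx Hy. exists (phi y - phi x)%C. split.
    + apply Hi. lra. pose proof (Rmax_r M 0). lra.
    + apply HP. apply Cmod_ball0.
      eapply Rle_lt_trans. unfold Cminus. apply Cmod_triangle. rewrite Cmod_opp.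
      pose proof (Heta' x Hx). pose proof (HM y ltac:(pose proof (Rmax_l M 0); lra)).
      destruct eps; simpl in *; lra.
Qed.


Definition kern (s nu : C) (t : R) : C := (Cpowc (RtoC t) (s - 1) * Cexp (- (nu * RtoC t)))%C.
Definition Iv (s nu : C) : C :=
  RInt_gen (V := C_R_CompleteNormedModule) (kern s nu) (at_right 0) (Rbar_locally p_infty).

Lemma is_derive_RtoC_ln t : 0 < t ->
  is_derive (V := C_R_NormedModule) (fun u => RtoC (ln u)) t (RtoC (/ t)).
Proof.
  intros Ht. apply is_derive_C_intro; simpl.
  - apply is_derive_ln; auto.
  - apply (is_derive_const (K := R_AbsRing) (V := R_NormedModule)).
Qed.

Lemma locally_pos (t : R) : 0 < t -> locally t (fun u => 0 < u).
Proof.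
  intros Ht. exists (mkposreal t Ht). intros y Hy.
  assert (A : Rabs (y - t) < t) by exact Hy.
  apply Rabs_def2 in A. lra.
Qed.

Lemma is_derive_Cpowc t w : 0 < t ->
  is_derive (V := C_R_NormedModule) (fun u => Cpowc (RtoC u) w) t
    (w * RtoC (/ t) * Cpowc (RtoC t) w)%C.
Proof.
  intros Ht.
  apply is_derive_ext_loc with (f := fun u => Cexp (w * RtoC (ln u))%C).
  - eapply filter_imp; [|apply (locally_pos t Ht)].
    intros u Hu. simpl. rewrite Cpowc_pos; auto.
  - eapply is_derive_eqv.
    + apply is_derive_Cexp. apply is_derive_Cscal. apply is_derive_RtoC_ln; auto.
    + rewrite Cpowc_pos; auto.
Qed.

Lemma is_derive_Cexp_lin (nu : C) t :
  is_derive (V := C_R_NormedModule) (fun u => Cexp (- (nu * RtoC u))%C) t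
    (- nu * Cexp (- (nu * RtoC t)))%C.
Proof.
  apply is_derive_ext with (f := fun u => Cexp (RtoC u * (- nu) + 0)%C).
  - intros u. f_equal. ring.
  - eapply is_derive_eqv.
    + apply is_derive_Cexp. apply is_derive_lin.
    + simpl. assert (E : (RtoC t * - nu + 0 = - (nu * RtoC t))%C) by ring.
      rewrite E. reflexivity.
Qed.

Lemma is_derive_kern s nu t : 0 < t ->
  is_derive (V := C_R_NormedModule) (kern s nu) t
   ((s - 1) * RtoC (/ t) * Cpowc (RtoC t) (s - 1) * Cexp (- (nu * RtoC t))
    + Cpowc (RtoC t) (s - 1) * (- nu * Cexp (- (nu * RtoC t))))%C.
Proof.
  intros Ht. unfold kern. apply is_derive_Cmult.
  - apply is_derive_Cpowc; auto.
  - apply is_derive_Cexp_lin.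
Qed.

Lemma kern_cont s nu t : 0 < t -> continuous (U := C_R_NormedModule) (kern s nu) t.
Proof.
  intros Ht. apply (ex_derive_continuous (K := R_AbsRing) (V := C_R_NormedModule)).
  eexists. apply is_derive_kern; auto.
Qed.

Lemma Cmod_kern s nu t : 0 < t ->
  Cmod (kern s nu t) = Rpower t (Re s - 1) * exp (- Re nu * t).
Proof.
  intros Ht. unfold kern. rewrite Cmod_mult, Cmod_Cpowc_pos, Cmod_Cexp; auto.
  assert (E1 : Re (s - 1)%C = Re s - 1) by (destruct s; unfold Re; simpl; lra).
  assert (E2 : Re (- (nu * RtoC t))%C = - Re nu * t) by (destruct nu; unfold Re; simpl; lra).
  rewrite E1, E2. reflexivity.
Qed.

Lemma Iv_correct s nu : 0 < Re s -> 0 < Re nu -> IG (kern s nu) (Iv s nu).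
Proof.
  intros Hs Hnu.
  destruct (ex_bound (Re s) (Re nu) Hs Hnu) as [B [HB HBb]].
  destruct (HBb (kern s nu) 1) as [I [HI _]].
  - lra.
  - intros; apply kern_cont; auto.
  - intros t Ht. rewrite Cmod_kern by auto. lra.
  - unfold Iv. rewrite (IG_RInt_gen _ _ HI). exact HI.
Qed.

Lemma Cpowc_succ t w : 0 < t -> Cpowc (RtoC t) (w + 1)%C = (Cpowc (RtoC t) w * RtoC t)%C.
Proof.
  intros Ht. pose proof (Cpowc_pos_add_nat t w 1 Ht) as H.
  change (INR 1) with 1 in H. rewrite pow_1 in H. exact H.
Qed.

Lemma lim0_pow (sg a : R) : 0 < sg -> 0 <= a -> forall eps, 0 < eps ->
  exists eta, 0 < eta /\ forall x, 0 < x < eta -> Rpower x sg * exp (- a * x) < eps.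
Proof.
  intros Hs Ha eps He.
  exists (Rpower eps (1 / sg)). split. unfold Rpower; apply exp_pos.
  intros x [Hx Hxe].
  apply Rle_lt_trans with (Rpower x sg).
  - rewrite <- (Rmult_1_r (Rpower x sg)) at 2. apply Rmult_le_compat_l.
    unfold Rpower; left; apply exp_pos.
    rewrite <- exp_0. apply exp_le_mono. nra.
  - replace eps with (Rpower (Rpower eps (1 / sg)) sg).
    + unfold Rpower at 1 2. apply exp_increasing. apply Rmult_lt_compat_l; auto.
      apply ln_increasing; auto.
    + rewrite Rpower_mult. replace (1 / sg * sg) with 1 by (field; lra). apply Rpower_1; auto.
Qed.

Lemma liminf_pow (sg a : R) : 0 < a -> forall eps, 0 < eps ->
  exists M, forall y, M < y -> Rpower y sg * exp (- a * y) < eps.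
Proof.
  intros Ha eps He.
  destruct (poly_exp_bound sg (a / 2)) as [K [HK HKb]]; [lra|].
  exists (Rmax 1 ((2 / a) * ln (K / eps))).
  intros y Hy.
  assert (Hy1 : 1 < y) by (eapply Rle_lt_trans; [apply Rmax_l|exact Hy]).
  assert (Hy2 : (2 / a) * ln (K / eps) < y) by (eapply Rle_lt_trans; [apply Rmax_r|exact Hy]).
  apply Rle_lt_trans with (K * exp (a / 2 * y) * exp (- a * y)).
  - apply Rmult_le_compat_r. left; apply exp_pos. apply HKb. lra.
  - rewrite Rmult_assoc, <- exp_plus.
    replace (a / 2 * y + - a * y) with (- (a / 2) * y) by field.
    assert (exp (- (a / 2) * y) < eps / K).
    { rewrite <- (exp_ln (eps / K)) by (apply Rdiv_lt_0_compat; auto).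
      apply exp_increasing.
      rewrite ln_div by auto.
      rewrite ln_div in Hy2 by auto.
      assert (- (a / 2) * (2 / a * (ln K - ln eps)) = ln eps - ln K) by (field; lra).
      assert (- (a / 2) * y < - (a / 2) * (2 / a * (ln K - ln eps))).
      { assert (0 < a / 2) by lra. nra. }
      lra. }
    apply Rlt_le_trans with (K * (eps / K)).
    + apply Rmult_lt_compat_l; auto.
    + right. field. lra.
Qed.

Lemma Iv_rec s nu : 0 < Re s -> 0 < Re nu -> (nu * Iv (s + 1) nu = s * Iv s nu)%C.
Proof.
  intros Hs Hnu.
  assert (Hs1 : 0 < Re (s + 1)%C) by (destruct s; unfold Re in *; simpl in *; lra).
  set (phi := kern (s + 1) nu).
  set (h := fun t => (s * kern s nu t + (- nu) * kern (s + 1) nu t)%C).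
  assert (Hd : forall t, 0 < t -> is_derive (V := C_R_NormedModule) phi t (h t)).
  { intros t Ht. eapply is_derive_eqv.
    - apply is_derive_kern; auto.
    - unfold h, kern.
      assert (Es : Cpowc (RtoC t) s = (Cpowc (RtoC t) (s - 1) * RtoC t)%C).
      { rewrite <- Cpowc_succ by auto. f_equal. ring. }
      replace (s + 1 - 1)%C with s by ring.
      rewrite Es.
      assert (RtoC t <> RtoC 0) by (intro E; apply RtoC_inj in E; lra).
      match goal with |- ?a = ?b => change (@eq C a b) end.
      rewrite RtoC_inv by lra. field. auto. }
  assert (Hh : IG h (s * Iv s nu + (- nu) * Iv (s + 1) nu)%C).
  { apply IG_plus; apply IG_Cmult; apply Iv_correct; auto. }
  assert (Hh0 : IG h (RtoC 0)).
  { apply IG_FTC with (phi := phi).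
    - intros x y Hx Hy.
      apply (is_RInt_derive (V := C_R_CompleteNormedModule) phi h).
      + intros z Hz. apply Hd.
        destruct Hz as [Hz _]. eapply Rlt_le_trans; [|exact Hz]. apply Rmin_glb_lt; auto.
      + intros z Hz.
        assert (0 < z) by (destruct Hz as [Hz _]; eapply Rlt_le_trans; [|exact Hz]; apply Rmin_glb_lt; auto).
        apply (ex_derive_continuous (K := R_AbsRing) (V := C_R_NormedModule)).
        eexists. unfold h. apply is_derive_Cplus; apply is_derive_Cscal; apply is_derive_kern; auto.
    - intros eps He.
      destruct (lim0_pow (Re (s + 1) - 1) (Re nu)) with (eps := eps) as [eta [Heta Heta']]; auto.
      destruct s; unfold Re in *; simpl in *; lra. lra.
      exists eta. split; auto. intros x Hx. unfold phi. rewrite Cmod_kern by lra. apply Heta'; auto.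
    - intros eps He.
      destruct (liminf_pow (Re (s + 1) - 1) (Re nu) Hnu eps He) as [M HM].
      exists (Rmax M 0). intros y Hy.
      unfold phi. rewrite Cmod_kern by (eapply Rle_lt_trans; [apply Rmax_r|exact Hy]).
      apply HM. eapply Rle_lt_trans; [apply Rmax_l|exact Hy]. }
  pose proof (IG_unique _ _ _ Hh Hh0) as E.
  replace (nu * Iv (s + 1) nu)%C with (s * Iv s nu - (s * Iv s nu + - nu * Iv (s + 1) nu))%C by ring.
  rewrite E. ring.
Qed.


Lemma Re_le_Cmod (z : C) : Rabs (Re z) <= Cmod z.
Proof. apply re_le_Cmod. Qed.

Lemma Iv_taylor s nu0 : 0 < Re s -> 0 < Re nu0 -> exists Cst, 0 <= Cst /\ forall d : C,
  Cmod d <= Re nu0 / 2 ->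
  Cmod (Iv s (nu0 + d) - Iv s nu0 + d * Iv (s + 1) nu0)%C <= Cst * Cmod d ^ 2.
Proof.
  intros Hs Ha.
  set (a := Re nu0).
  destruct (ex_bound (Re s + 2) (a / 2)) as [B [HB HBb]]; [lra|unfold a; lra|].
  exists B. split; auto.
  intros d Hd.
  assert (Hs1 : 0 < Re (s + 1)%C) by (destruct s; unfold Re in *; simpl in *; lra).
  assert (Hnd : 0 < Re (nu0 + d)%C).
  { pose proof (Re_le_Cmod d) as H1. pose proof (Rle_abs (- Re d)) as H2.
    rewrite Rabs_Ropp in H2.
    assert (E : Re (nu0 + d)%C = Re nu0 + Re d) by (destruct nu0, d; reflexivity).
    rewrite E. unfold a in *. lra. }
  set (g := fun t => (kern s (nu0 + d) t + (- (1)) * kern s nu0 t + d * kern (s + 1) nu0 t)%C).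
  assert (Hg : IG g (Iv s (nu0 + d) - Iv s nu0 + d * Iv (s + 1) nu0)%C).
  { replace (Iv s (nu0 + d) - Iv s nu0 + d * Iv (s + 1) nu0)%C with
      (Iv s (nu0 + d) + (- (1)) * Iv s nu0 + d * Iv (s + 1) nu0)%C by ring.
    apply IG_plus. apply IG_plus. apply Iv_correct; auto.
    apply IG_Cmult; apply Iv_correct; auto. apply IG_Cmult. apply Iv_correct; auto. }
  destruct (HBb g (Cmod d ^ 2)) as [I [HI HIb]].
  - apply pow2_ge_0.
  - intros t Ht. unfold g. apply (ex_derive_continuous (K := R_AbsRing) (V := C_R_NormedModule)).
    eexists.
    apply (is_derive_Cplus (fun t => kern s (nu0 + d) t + (- (1)) * kern s nu0 t)%C
                           (fun t => d * kern (s + 1) nu0 t)%C).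
    apply (is_derive_Cplus (fun t => kern s (nu0 + d) t) (fun t => (- (1)) * kern s nu0 t)%C).
    apply is_derive_kern; auto.
    apply (is_derive_Cscal (- (1))%C (kern s nu0)). apply is_derive_kern; auto.
    apply (is_derive_Cscal d (kern (s + 1) nu0)). apply is_derive_kern; auto.
  - intros t Ht.
    assert (Eg : g t = (kern s nu0 t * (Cexp (- (d * RtoC t)) - 1 + d * RtoC t))%C).
    { unfold g, kern.
      replace (- ((nu0 + d) * RtoC t))%C with (- (nu0 * RtoC t) + - (d * RtoC t))%C by ring.
      rewrite Cexp_add.
      replace (s + 1 - 1)%C with ((s - 1) + 1)%C by ring.
      rewrite Cpowc_succ by auto. ring. }
    rewrite Eg, Cmod_mult, Cmod_kern by auto.
    pose proof (Cexp_taylor1 (d * RtoC t)) as T.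
    rewrite Cmod_mult, Cmod_R, Rabs_right in T by lra.
    assert (Hdt : Cmod d * t <= a / 2 * t) by (apply Rmult_le_compat_r; lra).
    assert (E1 : Rpower t (Re s + 2 - 1) = Rpower t (Re s - 1) * t ^ 2).
    { rewrite <- Rpower_pow by auto. rewrite <- Rpower_plus. f_equal. simpl. ring. }
    rewrite E1.
    apply Rle_trans with (Rpower t (Re s - 1) * exp (- a * t) * ((Cmod d * t) ^ 2 * exp (Cmod d * t))).
    { apply Rmult_le_compat_l; auto. apply Rmult_le_pos; unfold Rpower; left; apply exp_pos. }
    assert (exp (- a * t) * exp (Cmod d * t) <= exp (- (a / 2) * t)).
    { rewrite <- exp_plus. apply exp_le_mono. lra. }
    assert (0 <= Rpower t (Re s - 1)) by (unfold Rpower; left; apply exp_pos).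
    assert (0 <= Cmod d ^ 2 * t ^ 2) by (apply Rmult_le_pos; apply pow2_ge_0).
    replace (Rpower t (Re s - 1) * exp (- a * t) * ((Cmod d * t) ^ 2 * exp (Cmod d * t)))
      with ((Rpower t (Re s - 1) * (Cmod d ^ 2 * t ^ 2)) * (exp (- a * t) * exp (Cmod d * t))) by ring.
    replace (Cmod d ^ 2 * (Rpower t (Re s - 1) * t ^ 2 * exp (- (a / 2) * t)))
      with ((Rpower t (Re s - 1) * (Cmod d ^ 2 * t ^ 2)) * exp (- (a / 2) * t)) by ring.
    apply Rmult_le_compat_l; auto. apply Rmult_le_pos; auto.
  - rewrite <- (IG_unique _ _ _ HI Hg). lra.
Qed.

Definition nup (mu : C) (l : R) : C := (RtoC l * (mu - 1) + 1)%C.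

Lemma is_derive_Iv_path s mu l0 : 0 < Re s -> 0 < Re (nup mu l0) ->
  is_derive (V := C_R_NormedModule) (fun l => Iv s (nup mu l)) l0
    (- (mu - 1) * Iv (s + 1) (nup mu l0))%C.
Proof.
  intros Hs Hn.
  destruct (Iv_taylor s (nup mu l0) Hs Hn) as [Cst [HC HT]].
  unfold is_derive, filterdiff. split.
  { apply is_linear_scal_l. }
  intros x Hx. apply (is_filter_lim_locally_unique (K := R_AbsRing) (V := AbsRing_NormedModule R_AbsRing)) in Hx. subst x.
  intros eps.
  set (c := Cmod (mu - 1)%C).
  assert (Hc : 0 <= c) by apply Cmod_ge_0.
  set (r := Rmin (Re (nup mu l0) / (2 * (c + 1))) (eps / (Cst * c ^ 2 + 1))).
  assert (Hr : 0 < r).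
  { apply Rmin_glb_lt; apply Rdiv_lt_0_compat; try lra.
    destruct eps; simpl; lra. assert (0 <= Cst * c^2) by (apply Rmult_le_pos; auto; apply pow2_ge_0). lra. }
  exists (mkposreal r Hr). intros y Hy.
  assert (Hy' : Rabs (y - l0) < r) by exact Hy.
  rewrite scal_C, !minus_C, norm_C.
  change (minus (Iv s (nup mu y)) (Iv s (nup mu l0))) with (Iv s (nup mu y) - Iv s (nup mu l0))%C.
  change (minus y l0) with (y - l0).
  change (norm (y - l0)) with (Rabs (y - l0)).
  set (d := (RtoC (y - l0) * (mu - 1))%C).
  assert (Enu : nup mu y = (nup mu l0 + d)%C).
  { unfold nup, d. rewrite RtoC_minus. ring. }
  rewrite Enu.
  replace (Iv s (nup mu l0 + d) - Iv s (nup mu l0) -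
           RtoC (y - l0) * (- (mu - 1) * Iv (s + 1) (nup mu l0)))%C
    with (Iv s (nup mu l0 + d) - Iv s (nup mu l0) + d * Iv (s + 1) (nup mu l0))%C
    by (unfold d; ring).
  assert (Hd : Cmod d = Rabs (y - l0) * c) by (unfold d; rewrite Cmod_mult, Cmod_R; reflexivity).
  assert (Hr1 : r <= Re (nup mu l0) / (2 * (c + 1))) by apply Rmin_l.
  assert (Hr2 : r <= eps / (Cst * c ^ 2 + 1)) by apply Rmin_r.
  assert (Ha : 0 <= Rabs (y - l0)) by apply Rabs_pos.
  eapply Rle_trans. apply HT.
  - rewrite Hd.
    apply Rle_trans with (r * c). apply Rmult_le_compat_r; lra.
    apply Rle_trans with (Re (nup mu l0) / (2 * (c + 1)) * c). apply Rmult_le_compat_r; lra.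
    replace (Re (nup mu l0) / (2 * (c + 1)) * c) with (Re (nup mu l0) / 2 * (c / (c + 1))) by (field; lra).
    pose proof (frac_lt c (Re (nup mu l0) / 2) Hc ltac:(lra)). lra.
  - rewrite Hd.
    replace (Cst * (Rabs (y - l0) * c) ^ 2) with ((Cst * c ^ 2 * Rabs (y - l0)) * Rabs (y - l0)) by ring.
    apply Rmult_le_compat_r; auto.
    assert (HK : 0 <= Cst * c ^ 2) by (apply Rmult_le_pos; auto; apply pow2_ge_0).
    apply Rle_trans with (Cst * c ^ 2 * (eps / (Cst * c ^ 2 + 1))).
    + apply Rmult_le_compat_l; auto. lra.
    + replace (Cst * c ^ 2 * (eps / (Cst * c ^ 2 + 1))) with (eps * (Cst * c ^ 2 / (Cst * c ^ 2 + 1))) by (field; lra).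
      pose proof (frac_lt (Cst * c ^ 2) eps HK ltac:(destruct eps; simpl; lra)). lra.
Qed.

Lemma ln_sqrt' (S : R) : 0 < S -> ln (sqrt S) = ln S / 2.
Proof.
  intros HS. assert (0 < sqrt S) by (apply sqrt_lt_R0; auto).
  rewrite <- (sqrt_sqrt S) at 2 by lra. rewrite ln_mult by auto. field.
Qed.

Definition Lp (mu : C) (l : R) : C :=
  (ln (Cmod (nup mu l)), atan (Im (nup mu l) / Re (nup mu l))).

Lemma nup_re p q l : Re (nup (p, q) l) = l * (p - 1) + 1.
Proof. unfold nup, Re; simpl; ring. Qed.
Lemma nup_im p q l : Im (nup (p, q) l) = l * q.
Proof. unfold nup, Im; simpl; ring. Qed.

Lemma is_derive_Lp mu l : 0 < Re (nup mu l) ->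
  is_derive (V := C_R_NormedModule) (Lp mu) l ((mu - 1) / nup mu l)%C.
Proof.
  destruct mu as [p q]. intros Hx. rewrite nup_re in Hx.
  assert (HS : 0 < (l * (p - 1) + 1) ^ 2 + (l * q) ^ 2).
  { pose proof (pow2_ge_0 (l * q)). assert (0 < (l * (p - 1) + 1) ^ 2) by (apply pow_lt; lra). lra. }
  apply is_derive_eqv with
    (l := (((p - 1) * (l * (p - 1) + 1) + q * (l * q)) / ((l * (p - 1) + 1) ^ 2 + (l * q) ^ 2),
           q / ((l * (p - 1) + 1) ^ 2 + (l * q) ^ 2)) : C).
  - apply is_derive_C_intro.
    + apply is_derive_ext_loc with (f := fun l => ln ((l * (p - 1) + 1) ^ 2 + (l * q) ^ 2) / 2).
      * assert (Hl : locally l (fun u => 0 < u * (p - 1) + 1)).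
        { assert (Hk : 0 < Rabs (p - 1) + 1) by (pose proof (Rabs_pos (p - 1)); lra).
          exists (mkposreal ((l * (p - 1) + 1) / (Rabs (p - 1) + 1)) ltac:(apply Rdiv_lt_0_compat; lra)).
          intros u Hu. assert (A : Rabs (u - l) < (l * (p - 1) + 1) / (Rabs (p - 1) + 1)) by exact Hu.
          assert (B : Rabs ((u - l) * (p - 1)) < l * (p - 1) + 1).
          { rewrite Rabs_mult.
            apply Rle_lt_trans with ((l * (p - 1) + 1) / (Rabs (p - 1) + 1) * Rabs (p - 1)).
            - apply Rmult_le_compat_r. apply Rabs_pos. lra.
            - replace (l * (p - 1) + 1) with ((l * (p - 1) + 1) / (Rabs (p - 1) + 1) * (Rabs (p - 1) + 1)) at 2 by (field; lra).
              apply Rmult_lt_compat_l. apply Rdiv_lt_0_compat; lra. lra. }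
          apply Rabs_def2 in B. lra. }
        eapply filter_imp; [|exact Hl]. intros u Hu. simpl.
        change (fst (Lp (p, q) u)) with (ln (Cmod (nup (p, q) u))).
        unfold Cmod. rewrite ln_sqrt'.
        * f_equal. f_equal. unfold nup; simpl. ring.
        * unfold nup; simpl. pose proof (pow2_ge_0 (u * q)).
          assert (0 < (u * (p - 1) + 1) ^ 2) by (apply pow_lt; lra).
          match goal with |- 0 < ?a => replace a with ((u * (p - 1) + 1) ^ 2 + (u * q) ^ 2) by ring end.
          lra.
      * auto_derive. lra. simpl. field. lra.
    + apply is_derive_ext with (f := fun l => atan ((l * q) / (l * (p - 1) + 1))).
      * intros u. unfold Lp. cbn [snd]. rewrite nup_re, nup_im. reflexivity.
      * auto_derive. lra. simpl. field; repeat split; try lra; intro Hc; nra.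
  - unfold nup, Cdiv, Cinv. apply injective_projections; simpl;
    field; repeat split; try lra; intro Hc; nra.
Qed.


Lemma Clog_Re_pos (z : C) : 0 < Re z -> Clog z = (ln (Cmod z), atan (Im z / Re z)).
Proof.
  intros H. unfold Clog, Carg. destruct (Rlt_dec 0 (Re z)); [reflexivity|lra].
Qed.

Lemma Iv_mu s mu : 0 < Re s -> 0 < Re mu -> Iv s mu = (Iv s 1 / Cpowc mu s)%C.
Proof.
  intros Hs Hmu.
  assert (Hpos : forall l, 0 <= l <= 1 -> 0 < Re (nup mu l)).
  { intros l Hl. destruct mu as [p q]. rewrite nup_re. unfold Re in Hmu; simpl in Hmu.
    destruct (Rle_dec p 1).
    - assert (l * (p - 1) >= p - 1) by nra. lra.
    - nra. }
  set (h := fun l => (Iv s (nup mu l) * Cexp (s * Lp mu l))%C).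
  assert (Hd : forall l, 0 <= l <= 1 -> is_derive (V := C_R_NormedModule) h l (RtoC 0)).
  { intros l Hl. eapply is_derive_eqv.
    - unfold h. apply is_derive_Cmult.
      + apply is_derive_Iv_path; auto.
      + apply is_derive_Cexp. apply is_derive_Cscal. apply is_derive_Lp. auto.
    - pose proof (Hpos l Hl) as Hp.
      assert (Hn : nup mu l <> RtoC 0).
      { intros E. rewrite E in Hp. unfold Re in Hp; simpl in Hp; lra. }
      pose proof (Iv_rec s (nup mu l) Hs Hp) as Hr.
      cbv beta. set (E := Cexp (s * Lp mu l)%C). set (nu := nup mu l) in *.
      replace (- (mu - 1) * Iv (s + 1) nu * E + Iv s nu * (s * ((mu - 1) / nu) * E))%C
        with ((mu - 1) * E * ((s * Iv s nu) - nu * Iv (s + 1) nu) / nu)%C by (field; auto).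
      rewrite Hr. match goal with |- ?a = ?b => change (@eq C a b) end. field. auto. }
  assert (HI := is_RInt_derive (V := C_R_CompleteNormedModule) h (fun _ => RtoC 0) 0 1).
  rewrite Rmin_left, Rmax_right in HI by lra.
  specialize (HI Hd (fun x _ => continuous_const _ x)).
  assert (HI2 := is_RInt_const (V := C_R_NormedModule) 0 1 (RtoC 0)).
  apply (is_RInt_unique (V := C_R_CompleteNormedModule)) in HI.
  apply (is_RInt_unique (V := C_R_CompleteNormedModule)) in HI2.
  rewrite HI in HI2. rewrite minus_C, scal_C in HI2.
  assert (Eh : h 1 = h 0).
  { assert (X : (h 1 - h 0)%C = RtoC 0) by (rewrite HI2; ring).
    replace (h 1) with (h 1 - h 0 + h 0)%C by ring. rewrite X. ring. }
  assert (N1 : nup mu 1 = mu) by (unfold nup; ring).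
  assert (N0 : nup mu 0 = RtoC 1) by (unfold nup; ring).
  assert (H1 : h 1 = (Iv s mu * Cpowc mu s)%C).
  { unfold h, Lp, Cpowc. rewrite N1. rewrite (Clog_Re_pos mu Hmu). reflexivity. }
  assert (H0 : h 0 = Iv s (RtoC 1)).
  { unfold h, Lp. rewrite N0.
    assert (E : ((ln (Cmod (RtoC 1)), atan (Im (RtoC 1) / Re (RtoC 1))) : C) = RtoC 0).
    { rewrite Cmod_1, ln_1. unfold Im, Re; simpl. unfold Rdiv. rewrite Rmult_0_l, atan_0. reflexivity. }
    rewrite E. replace (s * RtoC 0)%C with (RtoC 0) by ring. rewrite Cexp_0. ring. }
  rewrite H1, H0 in Eh.
  assert (Hne : Cpowc mu s <> RtoC 0) by (unfold Cpowc; apply Cexp_neq0).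
  rewrite <- Eh. field. auto.
Qed.

Lemma CGamma_Iv s : CGamma s = Iv s (RtoC 1).
Proof.
  unfold CGamma, Iv. f_equal. apply functional_extensionality. intros t.
  unfold kern. f_equal.
  replace (- (RtoC 1 * RtoC t))%C with (RtoC (- t)) by (rewrite RtoC_opp; ring).
  symmetry. apply Cexp_RtoC.
Qed.


Lemma Iv_shift s mu n : 0 < Re s -> 0 < Re mu ->
  (Iv (s + RtoC (INR n)) mu * mu ^ n = poch s n * Iv s mu)%C.
Proof.
  intros Hs Hmu. induction n.
  - simpl. replace (s + RtoC 0)%C with s by ring. ring.
  - assert (Hsn : 0 < Re (s + RtoC (INR n))%C).
    { pose proof (pos_INR n). destruct s; unfold Re in *; simpl in *. lra. }
    pose proof (Iv_rec (s + RtoC (INR n)) mu Hsn Hmu) as Hr.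
    replace (s + RtoC (INR (S n)))%C with (s + RtoC (INR n) + 1)%C
      by (rewrite S_INR, RtoC_plus; ring).
    rewrite Cpow_S. simpl poch.
    replace (Iv (s + RtoC (INR n) + 1) mu * (mu * mu ^ n))%C
      with ((mu * Iv (s + RtoC (INR n) + 1) mu) * mu ^ n)%C by ring.
    rewrite Hr.
    replace ((s + RtoC (INR n)) * Iv (s + RtoC (INR n)) mu * mu ^ n)%C
      with ((s + RtoC (INR n)) * (Iv (s + RtoC (INR n)) mu * mu ^ n))%C by ring.
    rewrite IHn. ring.
Qed.


Definition Tm (a b : C) (k m n : nat) : C :=
  (poch (RtoC (- INR m)) n * poch a n /
     (poch (RtoC (- INR m - INR k)) n * poch (1 + a + b + RtoC (INR k)) n)
   * poch b n / RtoC (INR (Factorial.fact n)))%C.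

Definition Rhs (a b : C) (k m : nat) : C :=
  (poch (1 + a + RtoC (INR k)) m * poch (1 + b + RtoC (INR k)) m /
   (poch (1 + RtoC (INR k)) m * poch (1 + a + b + RtoC (INR k)) m))%C.

Lemma poch_nz (a : C) n : (forall j, (j < n)%nat -> (a + RtoC (INR j))%C <> RtoC 0) -> poch a n <> RtoC 0.
Proof.
  induction n; intros H.
  - simpl. intro E. apply RtoC_inj in E. lra.
  - simpl. apply Cmult_neq_0. apply IHn. intros j Hj. apply H. lia. apply H. lia.
Qed.

Lemma RtoC_neq (x : R) : x <> 0 -> RtoC x <> RtoC 0.
Proof. intros H E. apply RtoC_inj in E. auto. Qed.

Ltac nzRe := let E := fresh in intro E; apply (f_equal Re) in E; unfold Re in E; simpl in E.

Ltac toC := match goal with |- ?a = ?b => change (@eq C a b) end.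

Lemma Tm_0 a b k m : Tm a b k m 0 = RtoC 1.
Proof.
  unfold Tm. simpl. field.
Qed.


Lemma Tm_S a b k m n :
  (forall j : nat, (1 + a + b + RtoC (INR k) + RtoC (INR j))%C <> RtoC 0) ->
  (n < m + k)%nat ->
  Tm a b k m (S n) = (Tm a b k m n * ((RtoC (INR n) - RtoC (INR m)) * (a + RtoC (INR n)) * (b + RtoC (INR n))
     / ((RtoC (INR n) - RtoC (INR m) - RtoC (INR k)) * (1 + a + b + RtoC (INR k) + RtoC (INR n))
        * (RtoC (INR n) + 1))))%C.
Proof.
  intros Hc Hn.
  assert (P1 : poch (RtoC (- INR m - INR k)) n <> RtoC 0).
  { apply poch_nz. intros j Hj. nzRe.
    assert (INR j < INR m + INR k) by (rewrite <- plus_INR; apply lt_INR; lia). lra. }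
  assert (P2 : poch (1 + a + b + RtoC (INR k)) n <> RtoC 0) by (apply poch_nz; intros; apply Hc).
  assert (P3 : RtoC (INR (Factorial.fact n)) <> RtoC 0) by (apply RtoC_neq, INR_fact_neq_0).
  assert (P4 : (RtoC (INR n) - RtoC (INR m) - RtoC (INR k))%C <> RtoC 0).
  { nzRe. assert (INR n < INR m + INR k) by (rewrite <- plus_INR; apply lt_INR; lia). lra. }
  assert (P5 := Hc n).
  assert (P6 : (RtoC (INR n) + 1)%C <> RtoC 0) by (nzRe; pose proof (pos_INR n); lra).
  unfold Tm. simpl poch.
  rewrite fact_simpl, mult_INR, RtoC_mult, S_INR, RtoC_plus.
  rewrite !RtoC_minus, !RtoC_opp.
  rewrite !RtoC_minus, !RtoC_opp in P1.
  field. repeat split; auto.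
Qed.

Lemma Tm_shift a b k m n : (1 <= k)%nat ->
  (forall j : nat, (1 + a + b + RtoC (INR k) + RtoC (INR j))%C <> RtoC 0) ->
  (n <= m + 1)%nat ->
  (Tm a b k (S m) n * (RtoC (INR m) + 1 - RtoC (INR n)) * (RtoC (INR m) + RtoC (INR k) + 1)
   = Tm a b k m n * (RtoC (INR m) + 1) * (RtoC (INR m) + RtoC (INR k) + 1 - RtoC (INR n)))%C.
Proof.
  intros Hk Hc. induction n; intros Hn.
  - rewrite !Tm_0. simpl. ring.
  - assert (Hn' : (n <= m)%nat) by lia.
    specialize (IHn ltac:(lia)).
    assert (HmK : 1 <= INR k) by (apply (le_INR 1); lia).
    assert (Hnm : INR n <= INR m) by (apply le_INR; lia).
    pose proof (pos_INR n). pose proof (pos_INR m).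
    assert (Q1 : (RtoC (INR m) + 1 - RtoC (INR n))%C <> RtoC 0) by (nzRe; lra).
    assert (Q2 : (RtoC (INR m) + RtoC (INR k) + 1)%C <> RtoC 0) by (nzRe; lra).
    assert (E : Tm a b k (S m) n = (Tm a b k m n * (RtoC (INR m) + 1) * (RtoC (INR m) + RtoC (INR k) + 1 - RtoC (INR n))
                 / ((RtoC (INR m) + 1 - RtoC (INR n)) * (RtoC (INR m) + RtoC (INR k) + 1)))%C).
    { rewrite <- IHn. field. auto. }
    rewrite (Tm_S a b k (S m) n Hc) by lia.
    rewrite (Tm_S a b k m n Hc) by lia.
    rewrite E. rewrite !S_INR, !RtoC_plus.
    assert (Q3 : (RtoC (INR n) - (RtoC (INR m) + 1) - RtoC (INR k))%C <> RtoC 0) by (nzRe; lra).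
    assert (Q4 : (RtoC (INR n) - RtoC (INR m) - RtoC (INR k))%C <> RtoC 0) by (nzRe; lra).
    assert (Q5 := Hc n).
    assert (Q6 : (RtoC (INR n) + 1)%C <> RtoC 0) by (nzRe; lra).
    toC. field. repeat split; auto.
Qed.

Lemma sum_Sn_C (f : nat -> C) n : sum_n f (S n) = (sum_n f n + f (S n))%C.
Proof. rewrite sum_Sn. reflexivity. Qed.

Lemma saal_partial a b k m N : (1 <= k)%nat ->
  (forall j : nat, (1 + a + b + RtoC (INR k) + RtoC (INR j))%C <> RtoC 0) ->
  (N <= m)%nat ->
  sum_n (Tm a b k (S m)) N =
   ((1 + a + RtoC (INR k) + RtoC (INR m)) * (1 + b + RtoC (INR k) + RtoC (INR m))
     / ((1 + RtoC (INR k) + RtoC (INR m)) * (1 + a + b + RtoC (INR k) + RtoC (INR m)))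
    * sum_n (Tm a b k m) N
    - (a + RtoC (INR N)) * (b + RtoC (INR N)) * Tm a b k m N
      / ((RtoC (INR m) + RtoC (INR k) + 1) * (1 + a + b + RtoC (INR k) + RtoC (INR m))))%C.
Proof.
  intros Hk Hc. 
  assert (HmK : 1 <= INR k) by (apply (le_INR 1); lia).
  pose proof (pos_INR m).
  assert (R1 : (1 + RtoC (INR k) + RtoC (INR m))%C <> RtoC 0) by (nzRe; lra).
  assert (R2 : (RtoC (INR m) + RtoC (INR k) + 1)%C <> RtoC 0) by (nzRe; lra).
  assert (R3 := Hc m).
  induction N; intros HN.
  - rewrite !sum_O, !Tm_0. simpl. toC. field. repeat split; auto.
  - specialize (IHN ltac:(lia)).
    rewrite !sum_Sn_C, IHN.
    assert (HNm : INR N + 1 <= INR m) by (rewrite <- S_INR; apply le_INR; lia).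
    pose proof (pos_INR N).
    assert (Sh := Tm_shift a b k m (S N) Hk Hc ltac:(lia)).
    rewrite S_INR, RtoC_plus in Sh.
    assert (Q1 : (RtoC (INR m) + 1 - (RtoC (INR N) + 1))%C <> RtoC 0) by (nzRe; lra).
    assert (E : Tm a b k (S m) (S N) = (Tm a b k m (S N) * (RtoC (INR m) + 1) * (RtoC (INR m) + RtoC (INR k) + 1 - (RtoC (INR N) + 1))
                 / ((RtoC (INR m) + 1 - (RtoC (INR N) + 1)) * (RtoC (INR m) + RtoC (INR k) + 1)))%C).
    { rewrite <- Sh. field. auto. }
    rewrite E. rewrite (Tm_S a b k m N Hc) by lia.
    rewrite S_INR, RtoC_plus.
    assert (Q4 : (RtoC (INR N) - RtoC (INR m) - RtoC (INR k))%C <> RtoC 0) by (nzRe; lra).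
    assert (Q5 := Hc N).
    assert (Q6 : (RtoC (INR N) + 1)%C <> RtoC 0) by (nzRe; lra).
    toC. field. repeat split; auto.
Qed.

Lemma saal a b k m : (1 <= k)%nat ->
  (forall j : nat, (1 + a + b + RtoC (INR k) + RtoC (INR j))%C <> RtoC 0) ->
  sum_n (Tm a b k m) m = Rhs a b k m.
Proof.
  intros Hk Hc.
  assert (HmK : 1 <= INR k) by (apply (le_INR 1); lia).
  induction m.
  - rewrite sum_O, Tm_0. unfold Rhs. simpl. toC. field.
  - pose proof (pos_INR m).
    rewrite sum_Sn_C, (saal_partial a b k m m Hk Hc (le_n m)), IHm.
    assert (Sh := Tm_shift a b k m m Hk Hc ltac:(lia)).
    assert (R2 : (RtoC (INR m) + RtoC (INR k) + 1)%C <> RtoC 0) by (nzRe; lra).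
    assert (E : Tm a b k (S m) m = (Tm a b k m m * (RtoC (INR m) + 1) * (RtoC (INR k) + 1)
                 / (RtoC (INR m) + RtoC (INR k) + 1))%C).
    { replace (Tm a b k (S m) m) with (Tm a b k (S m) m * (RtoC (INR m) + 1 - RtoC (INR m)) * (RtoC (INR m) + RtoC (INR k) + 1) / (RtoC (INR m) + RtoC (INR k) + 1))%C by (field; auto).
      rewrite Sh. field. auto. }
    rewrite (Tm_S a b k (S m) m Hc) by lia.
    rewrite E.
    unfold Rhs. simpl poch. rewrite !S_INR, !RtoC_plus.
    assert (R1 : (1 + RtoC (INR k) + RtoC (INR m))%C <> RtoC 0) by (nzRe; lra).
    assert (R3 := Hc m).
    assert (P1 : poch (1 + RtoC (INR k)) m <> RtoC 0).
    { apply poch_nz. intros j Hj. nzRe. pose proof (pos_INR j). lra. }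
    assert (P2 : poch (1 + a + b + RtoC (INR k)) m <> RtoC 0) by (apply poch_nz; intros; apply Hc).
    assert (Q3 : (RtoC (INR m) - (RtoC (INR m) + 1) - RtoC (INR k))%C <> RtoC 0) by (nzRe; lra).
    assert (Q6 : (RtoC (INR m) + 1)%C <> RtoC 0) by (nzRe; lra).
    toC. field. repeat split; auto.
Qed.


Lemma IG_sum (f : nat -> R -> C) (v : nat -> C) N :
  (forall n, (n <= N)%nat -> IG (f n) (v n)) ->
  IG (fun t => sum_n (fun n => f n t) N) (sum_n v N).
Proof.
  induction N; intros H.
  - rewrite sum_O. eapply IG_ext; [|apply (H 0%nat (le_n 0))].
    intros t _. rewrite sum_O. reflexivity.
  - rewrite sum_Sn_C. eapply IG_ext; [|apply IG_plus; [apply IHN|apply H]].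
    + intros t _. rewrite sum_Sn_C. reflexivity.
    + intros n Hn. apply H. lia.
    + lia.
Qed.

Lemma sum_n_Cmult_l (a : C) (u : nat -> C) N :
  sum_n (fun n => (a * u n)%C) N = (a * sum_n u N)%C.
Proof.
  induction N.
  - rewrite !sum_O. reflexivity.
  - rewrite !sum_Sn_C, IHN. toC. ring.
Qed.

Lemma sum_n_Cmult_r (a : C) (u : nat -> C) N :
  sum_n (fun n => (u n * a)%C) N = (sum_n u N * a)%C.
Proof.
  induction N.
  - rewrite !sum_O. reflexivity.
  - rewrite !sum_Sn_C, IHN. toC. ring.
Qed.

Theorem mainTheorem19 (m k : nat) (alpha beta mu : C) :
  (1 <= m)%nat -> (1 <= k)%nat ->
  ~ in_Z0minus alpha ->
  ~ in_Z0minus (1 + alpha + beta + RtoC (INR k))%C ->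
  0 < Re beta -> 0 < Re mu ->
  is_RInt_gen (V := C_R_NormedModule)
    (fun t : R =>
       (Cpowc (RtoC t) (beta - 1) * Cexp (- (mu * RtoC t))
        * F22_trunc (RtoC (- INR m)) alpha
                    (RtoC (- INR m - INR k)) (1 + alpha + beta + RtoC (INR k))
                    (mu * RtoC t) m)%C)
    (at_right 0) (Rbar_locally p_infty)
    (CGamma beta / Cpowc mu beta
     * (poch (1 + alpha + RtoC (INR k)) m * poch (1 + beta + RtoC (INR k)) m
        / (poch (1 + RtoC (INR k)) m * poch (1 + alpha + beta + RtoC (INR k)) m)))%C.
Proof.
  intros Hm Hk Ha Hc Hb Hmu.
  assert (Hc' : forall j : nat, (1 + alpha + beta + RtoC (INR k) + RtoC (INR j))%C <> RtoC 0).
  { intros j E. apply Hc. exists j.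
    replace (1 + alpha + beta + RtoC (INR k))%C with
      ((1 + alpha + beta + RtoC (INR k) + RtoC (INR j)) - RtoC (INR j))%C by ring.
    rewrite E, RtoC_opp. ring. }
  set (A := fun n => (poch (RtoC (- INR m)) n * poch alpha n /
             (poch (RtoC (- INR m - INR k)) n * poch (1 + alpha + beta + RtoC (INR k)) n))%C).
  set (cf := fun n => (A n * mu ^ n / RtoC (INR (Factorial.fact n)))%C).
  assert (HIG : IG (fun t => sum_n (fun n => (cf n * kern (beta + RtoC (INR n)) mu t)%C) m)
                   (sum_n (fun n => (cf n * Iv (beta + RtoC (INR n)) mu)%C) m)).
  { apply IG_sum. intros n _. apply IG_Cmult. apply Iv_correct; auto.
    pose proof (pos_INR n). destruct beta; unfold Re in *; simpl in *; lra. }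
  assert (Hval : sum_n (fun n => (cf n * Iv (beta + RtoC (INR n)) mu)%C) m =
     (CGamma beta / Cpowc mu beta
     * (poch (1 + alpha + RtoC (INR k)) m * poch (1 + beta + RtoC (INR k)) m
        / (poch (1 + RtoC (INR k)) m * poch (1 + alpha + beta + RtoC (INR k)) m)))%C).
  { rewrite sum_n_ext_loc with (b := fun n => (Tm alpha beta k m n * Iv beta mu)%C).
    - rewrite sum_n_Cmult_r. rewrite saal by auto.
      rewrite Iv_mu by auto. rewrite <- CGamma_Iv. unfold Rhs. toC. ring.
    - intros n Hn. unfold cf.
      assert (Hmun : (mu ^ n)%C <> RtoC 0).
      { apply Cpow_nz. intros E. rewrite E in Hmu. unfold Re in Hmu; simpl in Hmu. lra. }
      pose proof (Iv_shift beta mu n Hb Hmu) as Hs.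
      replace (A n * mu ^ n / RtoC (INR (Factorial.fact n)) * Iv (beta + RtoC (INR n)) mu)%C
        with (A n / RtoC (INR (Factorial.fact n)) * (Iv (beta + RtoC (INR n)) mu * mu ^ n))%C
        by (toC; field; apply RtoC_neq, INR_fact_neq_0).
      rewrite Hs. unfold Tm, A. toC. field.
      repeat split.
      + apply poch_nz; intros; apply Hc'.
      + apply poch_nz. intros j Hj. nzRe.
        assert (INR j < INR m + INR k) by (rewrite <- plus_INR; apply lt_INR; lia). lra.
      + apply RtoC_neq, INR_fact_neq_0. }
  rewrite <- Hval.
  eapply IG_ext; [|exact HIG].
  intros t Ht. simpl.
  unfold F22_trunc. rewrite <- sum_n_Cmult_l.
  apply sum_n_ext. intros n.
  unfold cf, kern.
  replace (beta + RtoC (INR n) - 1)%C with ((beta - 1) + RtoC (INR n))%C by ring.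
  rewrite Cpowc_pos_add_nat by auto.
  rewrite Cpow_mult_l, <- RtoC_pow.
  fold (A n). toC. field. apply RtoC_neq, INR_fact_neq_0.
Qed.
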